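(* Let $k\ge 2$ and $n=2k+1$. The distance characteristic polynomial of the friendship graph $F^{k}_{n}$ is $$P_D(\lambda)=(\lambda+1)^{n-k-1}(\lambda+3)^{k-1}\bigl[\lambda^{2}-(4k-3)\lambda-2k\bigr].$$ If $\lambda_1\ge\lambda_2\ge\cdots\ge\lambda_n$ is the distance spectrum of $F^{k}_{n}$, then $-1<\lambda_2<-\frac12$, $\lambda_3=-1$ and $\lambda_n=-3$.
   Context: For a connected graph $G$, the distance matrix $D(G)$ has as $(i,j)$-entry the distance between the $i$-th and $j$-th vertices; $P_D(\lambda)=\det(\lambda I-D(G))$ and the distance spectrum consists of the eigenvalues of $D(G)$. The friendship graph $F^{k}_{n}$ ($n=2k+1$) is obtained by taking $k$ copies of $C_3$ and identifying one vertex of each copy into a single common vertex. *)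

(* Defs.v *)
From mathcomp Require Import all_boot all_order all_algebra.
Set Implicit Arguments. Unset Strict Implicit. Unset Printing Implicit Defensive.
Import Order.TTheory GRing.Theory Num.Theory.
Local Open Scope ring_scope.

Fixpoint walk (T : finType) (e : rel T) (m : nat) (x y : T) : bool :=
  match m with
  | 0 => x == y
  | m'.+1 => walk e m' x y || [exists z, e x z && walk e m' z y]
  end.

(* Graph distance: least m with a walk of length <= m from x to y
   (for a connected graph on #|T| vertices, it is < #|T|). *)
Definition gdist (T : finType) (e : rel T) (x y : T) : nat :=
  find (fun m => walk e m x y) (iota 0 #|T|).

Definition dist_matrix (R : nzRingType) (n : nat) (e : rel 'I_n) : 'M[R]_n :=
  \matrix_(i, j) (gdist e i j)%:R.

(* Friendship graph F^k_n, n = 2k+1: vertex 0 is the common vertex,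
   triangle t (t < k) is {0, 2t+1, 2t+2}. *)
Definition friendship_rel (k : nat) : rel 'I_(2 * k + 1) :=
  fun i j => (i != j) &&
    [|| (val i == 0)%N, (val j == 0)%N | ((val i).-1 %/ 2 == (val j).-1 %/ 2)%N].

(* s is the distance spectrum (eigenvalues with multiplicity, i.e. roots of
   the characteristic polynomial) listed in nonincreasing order. *)
Definition is_sorted_spectrum (R : numDomainType) (n : nat) (A : 'M[R]_n)
    (s : seq R) : Prop :=
  [/\ size s = n, sorted (fun x y => y <= x) s &
      char_poly A = \prod_(x <- s) ('X - x%:P)].
Arguments friendship_rel : clear implicits.
Arguments dist_matrix R n e : clear implicits.

(* Main.v *)
Require Import Defs.
From mathcomp Require Import all_boot all_order all_algebra.
From mathcomp Require Import zify ring lra.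
Import Order.TTheory GRing.Theory Num.Theory.
Local Open Scope ring_scope.

Ltac dec_if :=
  repeat match goal with
  | |- context [if ?b then _ else _] =>
      first [ rewrite (_ : b = true); last by apply/idP; lia
            | rewrite (_ : b = false); last by apply/negbTE; lia
            | let E := fresh "E" in case E : b;
                [ have {}E : b := E | have {}E : ~~ b by rewrite E ] ]
  end.


Section S.
Variable R : rcfType.
Variable k : nat.
Hypothesis hk : (2 <= k)%N.

Definition dn (i j : nat) : nat :=
  if i == j then 0%N else if [|| i == 0%N, j == 0%N | ((i - 1) %/ 2 == (j - 1) %/ 2)%N] then 1%N else 2%N.
Definition Mf (i j : nat) : {poly R} := (if i == j then 'X else 0) - (dn i j)%:R.
Definition tp (i : nat) : nat := ((i - 1) %/ 2)%N.
Definition Wf (i j : nat) : {poly R} :=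
 if j == 0%N then (if i == 0%N then 'X else if i == 1%N then - (2 * k)%:R else - (k%:R - (tp i)%:R))
 else if j == 1%N then (if i == 0%N then -1 else if i == 1%N then 'X - (4*k)%:R + 3
    else if i == 2%N then - ((2*k)%:R - 1) else - (2 * (k%:R - (tp i)%:R)))
 else if (j %% 2 == 1)%N then (if i == j then 'X + 3 else if i == (j + 1)%N then 2 else 0)
 else (if i == j then 'X + 1 else 0).

Definition cd (j : nat) : {poly R} := if (j %% 2 == 1)%N && (2 < j)%N then 2 else 1.
Definition c1 (j : nat) : {poly R} := if (j %% 2 == 0)%N && (0 < j)%N then 1 else 0.
Definition c2 (j : nat) : {poly R} := if (j %% 2 == 1)%N && (2 < j)%N then 1 else 0.
Definition r1 (i : nat) : {poly R} := if (i %% 2 == 1)%N then 1 else 0.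
Definition r3 (i : nat) : {poly R} := if (i %% 2 == 0)%N && (0 < i)%N then 1 else 0.
Definition rd (i : nat) : {poly R} := if (i %% 2 == 1)%N && (2 < i)%N then 2 else 1.

Lemma tp1 s : tp (2*s+1+1) = s. Proof. rewrite /tp; lia. Qed.
Lemma tp2 s : tp (2*s+1+2) = s.+1. Proof. rewrite /tp; lia. Qed.
Lemma tp3 s : tp (2*s+2+1) = s.+1. Proof. rewrite /tp; lia. Qed.
Lemma tp4 s : tp (2*s+2+2) = s.+1. Proof. rewrite /tp; lia. Qed.
Lemma tp5 s : tp (2*s+1) = s. Proof. rewrite /tp; lia. Qed.
Lemma tp6 s : tp (2*s+2) = s. Proof. rewrite /tp; lia. Qed.

Lemma decomp (i : nat) : (i < 2*k+1)%N ->
  i = 0%N \/ (exists2 s, (s < k)%N & i = 2*s+1)%N \/ (exists2 s, (s < k)%N & i = 2*s+2)%N.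
Proof.
move=> hi; case: (posnP i) => [->|ip]; [by left|right].
case: (boolP (odd i)) => oi.
- left; exists (i %/ 2)%N; [lia|]. rewrite {1}(divn_eq i 2) modn2 oi; lia.
- right; exists (i.-1 %/ 2)%N; [lia|]. have := divn_eq i 2; rewrite modn2 (negbTE oi). lia.
Qed.

Definition dl (a b : nat) : {poly R} := if a == b then 1 else 0.
Local Notation n := (2 * k + 1)%N.

Lemma core (i j : nat) : (i < n)%N -> (j < n)%N ->
  cd j * (if (j < n)%N then Mf i j else 0) - c1 j * (if (j - 1 < n)%N then Mf i (j - 1) else 0)
   - c2 j * (if (j - 2 < n)%N then Mf i (j - 2) else 0) - c2 j * (if (j - 1 < n)%N then Mf i (j - 1) else 0)
  = rd i * (if (i < n)%N then Wf i j else 0) - r1 i * (if (i + 1 < n)%N then Wf (i + 1) j else 0)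
    - r1 i * (if (i + 2 < n)%N then Wf (i + 2) j else 0)
    - r3 i * (if (i + 1 < n)%N then Wf (i + 1) j else 0).
Proof.
move=> hi hj.
have [->|[[s hs ->]|[s hs ->]]] := decomp i hi;
have [->|[[t ht ->]|[t ht ->]]] := decomp j hj;
rewrite /Mf /dn /Wf /cd /c1 /c2 /r1 /r3 /rd; dec_if;
rewrite ?tp1 ?tp2 ?tp3 ?tp4 ?tp5 ?tp6; try (exfalso; lia);
first [ring | (have Hq : s = 0%N by lia); rewrite Hq; ring
      | (have Hq : k = s.+1 by lia); rewrite Hq; ring].
Qed.

Definition Pf (i j : nat) : {poly R} :=
  (if i == j then (if (j %% 2 == 1)%N && (2 < j)%N then 2 else 1) else 0)
  - (if (j %% 2 == 0)%N && (0 < j)%N && (i == j - 1)%N then 1 else 0)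
  - (if (j %% 2 == 1)%N && (2 < j)%N && ((i == j - 2)%N || (i == j - 1)%N) then 1 else 0).

Lemma Pf_col l j : Pf l j = cd j * dl l j - c1 j * dl l (j - 1) - c2 j * dl l (j - 2) - c2 j * dl l (j - 1).
Proof. rewrite /Pf /dl /cd /c1 /c2; dec_if; try (exfalso; lia); ring. Qed.

Lemma Pf_row i l : Pf i l = rd i * dl l i - r1 i * dl l (i + 1) - r1 i * dl l (i + 2) - r3 i * dl l (i + 1).
Proof. rewrite /Pf /dl /rd /r1 /r3; dec_if; try (exfalso; lia); ring. Qed.

Lemma sum_dl m (F : nat -> {poly R}) a :
  \sum_(l < m) F l * dl l a = if (a < m)%N then F a else 0.
Proof.
case: ifP => ham.
  rewrite (bigD1 (Ordinal ham)) //= /dl eqxx mulr1 big1 ?addr0 // => l hl.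
  case: eqP => [hla|]; last by rewrite mulr0.
  by move: hl; rewrite -val_eqE /= hla eqxx.
rewrite big1 // => l _; rewrite /dl; case: eqP => [hla|]; last by rewrite mulr0.
by move: ham; rewrite -hla ltn_ord.
Qed.

Definition Mm : 'M[{poly R}]_n := \matrix_(i, j) Mf i j.
Definition Pm : 'M[{poly R}]_n := \matrix_(i, j) Pf i j.
Definition Wm : 'M[{poly R}]_n := \matrix_(i, j) Wf i j.

Lemma MP_PW : Mm *m Pm = Pm *m Wm.
Proof.
apply/matrixP => i j; rewrite !mxE.
have eL : forall l : 'I_n, Mm i l * Pm l j =
   cd j * (Mf i l * dl l j) - c1 j * (Mf i l * dl l (j - 1)) - c2 j * (Mf i l * dl l (j - 2))
   - c2 j * (Mf i l * dl l (j - 1)).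
  by move=> l; rewrite !mxE Pf_col; ring.
have eR : forall l : 'I_n, Pm i l * Wm l j =
   rd i * (Wf l j * dl l i) - r1 i * (Wf l j * dl l (i + 1)) - r1 i * (Wf l j * dl l (i + 2))
   - r3 i * (Wf l j * dl l (i + 1)).
  by move=> l; rewrite !mxE Pf_row; ring.
rewrite (eq_bigr _ (fun l _ => eL l)) (eq_bigr _ (fun l _ => eR l)).
rewrite !sumrB -!mulr_sumr !(sum_dl _ (fun l => Mf i l)) !(sum_dl _ (fun l => Wf l j)).
exact: core.
Qed.
End S.

Lemma sum_delta_ord (S : nzRingType) m (F : 'I_m -> S) (p : 'I_m) :
  \sum_(l < m) F l * (l == p)%:R = F p.
Proof.
rewrite (bigD1 p) //= eqxx mulr1 big1 ?addr0 // => l /negbTE ->; by rewrite mulr0.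
Qed.

Lemma det_almost (S : idomainType) m (A : 'M[S]_m) (i0 i1 : 'I_m) :
  nat_of_ord i0 = 0%N -> nat_of_ord i1 = 1%N ->
  (forall i j : 'I_m, (i < j)%N -> ~~ ((nat_of_ord i == 0%N) && (nat_of_ord j == 1%N)) -> A i j = 0) ->
  A i0 i0 != 0 ->
  \det A = (A i0 i0 * A i1 i1 - A i0 i1 * A i1 i0) * \prod_(i < m | (1 < i)%N) A i i.
Proof.
move=> v0 v1 hA h0.
have i01 : i0 != i1 by rewrite -val_eqE /= v0 v1.
pose E : 'M[S]_m := \matrix_(i, j) ((i == j)%:R * (if i == i1 then A i0 i0 else 1)
    - ((i == i0) && (j == i1))%:R * A i0 i1).
have AE : forall i j, (A *m E) i j = A i j * (if j == i1 then A i0 i0 else 1)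
    - (j == i1)%:R * A i i0 * A i0 i1.
  move=> i j; rewrite mxE.
  under eq_bigr => l _ do rewrite mxE mulrBr.
  rewrite sumrB.
  have -> : \sum_(l < m) A i l * ((l == j)%:R * (if l == i1 then A i0 i0 else 1))
      = \sum_(l < m) (A i l * (if l == i1 then A i0 i0 else 1)) * (l == j)%:R.
    by apply: eq_bigr => l _; ring.
  rewrite (@sum_delta_ord _ _ (fun l => A i l * (if l == i1 then A i0 i0 else 1))).
  have -> : \sum_(l < m) A i l * (((l == i0) && (j == i1))%:R * A i0 i1)
      = \sum_(l < m) ((j == i1)%:R * A i l * A i0 i1) * (l == i0)%:R.
    by apply: eq_bigr => l _; case: (l == i0); case: (j == i1) => /=; ring.
  by rewrite (@sum_delta_ord _ _ (fun l => (j == i1)%:R * A i l * A i0 i1)).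
have trAE : is_trig_mx (A *m E).
  apply/is_trig_mxP => i j hij; rewrite AE.
  case: (eqVneq j i1) => [ej|nej].
    have ei : i = i0 by apply/val_inj; rewrite /= v0; move: hij; rewrite ej v1; lia.
    by rewrite ej ei /=; ring.
  rewrite /= hA //; first ring; apply/negP => /andP [_ /eqP hj].
  by move/eqP: nej; apply; apply/val_inj; rewrite /= hj v1.
have trE : is_trig_mx E^T.
  apply/is_trig_mxP => i j hij; rewrite !mxE.
  have -> : (j == i) = false by apply/negP => /eqP ej; move: hij; rewrite ej ltnn.
  have -> : (j == i0) && (i == i1) = false.
    apply/negP => /andP [/eqP hj2 /eqP hi2]; move: hij; by rewrite hj2 hi2 v0 v1.
  by rewrite /=; ring.
have i10 : i1 != i0 by rewrite eq_sym.
have dE : \det E = A i0 i0.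
  rewrite -det_tr det_trig // (bigD1 i1) //= big1 ?mulr1.
    by rewrite !mxE eqxx (negbTE i10) /=; ring.
  by move=> i /negbTE hi; rewrite !mxE eqxx hi andbF /=; ring.
have := det_mulmx A E; rewrite det_trig // dE.
rewrite (bigD1 i0) //= (bigD1 i1) /=; last by rewrite eq_sym.
rewrite !AE !eqxx (negbTE i01) /=.
have -> : \prod_(j < m | (j != i0) && (j != i1)) (A *m E) j j = \prod_(i < m | (1 < i)%N) A i i.
  apply: eq_big => [i|i /andP [hi0 hi1]].
    rewrite -!val_eqE /= v0 v1; case: (val i) => [|[|p]] //.
  by rewrite AE (negbTE hi1) /=; ring.
move=> h; apply: (mulIf h0); rewrite -h.
by rewrite mulrC; ring.
Qed.

Section T.
Variable R : rcfType.
Variable k : nat.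
Hypothesis hk : (2 <= k)%N.

Lemma gdistE (i j : 'I_(2*k+1)) : gdist (friendship_rel k) i j = dn i j.
Proof.
rewrite /gdist card_ord.
rewrite (_ : iota 0 (2*k+1) = 0 :: 1 :: 2 :: iota 3 (2*k-2))%N; last first.
  by rewrite (_ : (2*k+1 = (2*k-2).+3)%N) //; lia.
set e := friendship_rel k.
have ex1 : forall x y : 'I_(2*k+1), [exists z, e x z && (z == y)] = e x y.
  move=> x y; apply/existsP/idP => [[z /andP [h /eqP <-]] // | h].
  by exists y; rewrite h eqxx.
rewrite /= !ex1 /dn !subn1.
change (nat_of_ord i == nat_of_ord j) with (i == j).
have [eij|nij] := eqVneq i j; first by subst; rewrite /= ?eqxx.
rewrite /=.
case eij: (e i j).
  by move: eij; rewrite /e /friendship_rel nij /= => ->.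
have h0 : (0 < 2*k+1)%N by lia.
set z0 : 'I_(2*k+1) := Ordinal h0.
move: eij; rewrite /e /friendship_rel nij /= => /negbT.
rewrite !negb_or => /and3P [hi hj h3].
have -> : [exists z, e i z && ((z == j) || [exists z', e z z' && (z' == j)])].
  apply/existsP; exists z0; rewrite ex1 /e /friendship_rel /= orbT andbT.
  apply/andP; split; last by case: (z0 == j).
  by rewrite -val_eqE /=.
by rewrite (negbTE hi) (negbTE hj) (negbTE h3).
Qed.

Lemma charD : char_poly_mx (dist_matrix R (2*k+1) (friendship_rel k)) = Mm R k.
Proof.
apply/matrixP => i j; rewrite !mxE gdistE /Mf polyC_natr.
by change (nat_of_ord i == nat_of_ord j) with (i == j); case: (i == j).
Qed.
End T.

Section U.
Variable R : rcfType.
Variable k : nat.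
Hypothesis hk : (2 <= k)%N.

Lemma two_neq0 : (2 : {poly R}) != 0.
Proof. by rewrite -polyC_natr polyC_eq0 pnatr_eq0. Qed.

Lemma detP_neq0 : \det (Pm R k) != 0.
Proof.
rewrite -det_tr det_trig.
  apply/prodf_neq0 => i _; rewrite !mxE /Pf; dec_if; rewrite ?subr0 ?two_neq0 ?oner_neq0 //;
  exfalso; lia.
apply/is_trig_mxP => i j hij; rewrite !mxE /Pf; dec_if; try (exfalso; lia); ring.
Qed.

Lemma Wf_odd i : (2 < i)%N -> (i %% 2 == 1)%N -> Wf R k i i = 'X + 3.
Proof. by move=> h1 h2; rewrite /Wf; dec_if; try (exfalso; lia). Qed.
Lemma Wf_even i : (2 <= i)%N -> (i %% 2 == 0)%N -> Wf R k i i = 'X + 1.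
Proof. by move=> h1 h2; rewrite /Wf; dec_if; try (exfalso; lia). Qed.

Lemma prodW m : (1 <= m)%N -> \prod_(2 <= i < 2 * m + 1) Wf R k i i = ('X + 1) ^+ m * ('X + 3) ^+ (m - 1).
Proof.
elim: m => [|m IH] hm; first by [].
case: m IH hm => [|p] IH hm.
  by rewrite big_nat1 Wf_even //; ring.
rewrite (_ : (2 * p.+2 + 1 = (2 * p.+1 + 1).+2)%N); last by lia.
rewrite big_nat_recr; last lia.
rewrite big_nat_recr; last lia.
rewrite IH // Wf_odd; [|lia|lia]. rewrite Wf_even; [|lia|lia].
rewrite (_ : (p.+2 - 1 = p.+1)%N); last lia.
rewrite (_ : (p.+1 - 1 = p)%N); last lia.
rewrite !exprS /=; ring.
Qed.

Lemma detW : \det (Wm R k) = ('X ^+ 2 - ((4 * k)%:R - 3) * 'X - (2 * k)%:R) *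
   (('X + 1) ^+ k * ('X + 3) ^+ (k - 1)).
Proof.
have h0 : (0 < 2*k+1)%N by lia.
have h1 : (1 < 2*k+1)%N by lia.
rewrite (@det_almost _ _ _ (Ordinal h0) (Ordinal h1)) //; last first.
- by rewrite mxE /Wf /= polyX_eq0.
- move=> i j hij hn; rewrite mxE /Wf; dec_if; try (exfalso; lia); done.
have -> : \prod_(i < 2*k+1 | (1 < i)%N) Wm R k i i = \prod_(i < 2*k+1 | (1 < i)%N) Wf R k i i.
  by apply: eq_bigr => i _; rewrite mxE.
rewrite -(big_mkord (fun i => 1 < i)%N (fun i => Wf R k i i)) big_mkcond.
rewrite big_ltn // big_ltn //= !mul1r.
rewrite (eq_big_nat _ _ (F2 := fun i => Wf R k i i)); last by move=> i /andP [hi _]; rewrite hi.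
rewrite prodW; last by lia.
rewrite !mxE /Wf /=; ring.
Qed.

Lemma charpoly_main :
  char_poly (dist_matrix R (2*k+1) (friendship_rel k)) =
    ('X + 1) ^+ (2 * k + 1 - k - 1) * ('X + 3%:P) ^+ (k - 1) *
    ('X ^+ 2 - ((4 * k)%:R - 3)%:P * 'X - (2 * k)%:R%:P).
Proof.
rewrite /char_poly charD.
have : \det (Mm R k) * \det (Pm R k) = \det (Pm R k) * \det (Wm R k).
  by rewrite -!det_mulmx MP_PW.
rewrite mulrC => /(mulfI detP_neq0) ->.
rewrite detW (_ : (2 * k + 1 - k - 1 = k)%N); last by lia.
rewrite polyCB !polyC_natr.
ring.
all: done.
Qed.
End U.

Lemma prod_nseq (F : fieldType) m (c : F) :
  \prod_(x <- nseq m c) ('X - x%:P) = ('X - c%:P) ^+ m.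
Proof. by elim: m => [|m IH]; rewrite ?big_nil ?expr0 // big_cons IH exprS. Qed.

Lemma path_nseq (T : Type) (e : rel T) x m y s :
  e x y -> e y y -> path e y s -> path e x (nseq m.+1 y ++ s).
Proof.
move=> hxy hyy hs; elim: m x hxy => [|m IH] x hxy /=; first by rewrite hxy.
by rewrite hxy; apply: IH.
Qed.


Lemma sorted_cons2 (T : Type) (e : rel T) x y s : e x y -> path e y s -> sorted e [:: x, y & s].
Proof. by move=> h1 h2 /=; rewrite h1. Qed.

Section V.
Variable R : rcfType.
Variable k : nat.
Hypothesis hk : (2 <= k)%N.

Definition qa : R := (4 * k)%:R - 3.
Definition qb : R := (2 * k)%:R.
Definition sq : R := Num.sqrt (qa ^+ 2 + 4 * qb).
Definition qr1 : R := (qa + sq) / 2.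
Definition qr2 : R := (qa - sq) / 2.
Definition s0 : seq R := [:: qr1, qr2 & nseq k (-1) ++ nseq (k - 1) (-3)].

Lemma kR : (2 : R) <= k%:R.
Proof. by rewrite (ler_nat R 2 k). Qed.

Lemma qaE : qa = 4 * k%:R - 3. Proof. by rewrite /qa natrM. Qed.
Lemma qbE : qb = 2 * k%:R. Proof. by rewrite /qb natrM. Qed.

Lemma sq_ge0 : 0 <= sq. Proof. exact: sqrtr_ge0. Qed.
Lemma sq2 : sq ^+ 2 = qa ^+ 2 + 4 * qb.
Proof.
rewrite /sq sqr_sqrtr // qaE qbE; have := kR; nra.
Qed.

Lemma r2_gt : -1 < qr2.
Proof.
have := sq2; have := sq_ge0; have := kR; rewrite /qr2 qaE qbE => *; nra.
Qed.

Lemma r2_lt : qr2 < - (1 / 2).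
Proof.
have := sq2; have := sq_ge0; have := kR; rewrite /qr2 qaE qbE => *; nra.
Qed.

Lemma r12 : qr2 <= qr1.
Proof. have := sq_ge0; rewrite /qr1 /qr2 => *; lra. Qed.

Lemma quadE : ('X - qr1%:P) * ('X - qr2%:P) = 'X ^+ 2 - qa%:P * 'X - qb%:P.
Proof.
have e1 : qr1 + qr2 = qa by rewrite /qr1 /qr2; field.
have e2 : qr1 * qr2 = - qb.
  have -> : qr1 * qr2 = (qa ^+ 2 - sq ^+ 2) / 4 by rewrite /qr1 /qr2; field.
  by rewrite sq2; field.
rewrite -e1 (_ : qb = - (qr1 * qr2)); last by rewrite e2 opprK.
rewrite (polyCN (qr1 * qr2)) (polyCM qr1 qr2) (polyCD qr1 qr2); ring.
Qed.

Lemma s0_prod :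
  char_poly (dist_matrix R (2*k+1) (friendship_rel k)) = \prod_(x <- s0) ('X - x%:P).
Proof.
rewrite charpoly_main // !big_cons big_cat /= !prod_nseq !polyCN !opprK polyC1.
rewrite (_ : (2 * k + 1 - k - 1 = k)%N); last by lia.
rewrite mulrA quadE /qa /qb; ring.
Qed.

Lemma s0_sorted : sorted (fun x y : R => y <= x) s0.
Proof.
have [k' ek] : exists k', k = k'.+2 by exists (k - 2)%N; lia.
rewrite /s0 ek.
apply: sorted_cons2; first exact: r12.
rewrite (_ : (k'.+2 - 1 = k'.+1)%N); last by lia.
rewrite -(cats0 (nseq k'.+1 (-3 : R))).
apply: path_nseq; [by have := r2_gt => /ltW | by [] |].
by apply: path_nseq => //; lra.
Qed.
End V.



Theorem corollary2p9 (R : rcfType) (k : nat) (hk : (2 <= k)%N) :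
  let n := (2 * k + 1)%N in
  let D := dist_matrix R n (friendship_rel k) in
  char_poly D =
    ('X + 1) ^+ (n - k - 1) * ('X + 3%:P) ^+ (k - 1) *
    ('X ^+ 2 - ((4 * k)%:R - 3)%:P * 'X - (2 * k)%:R%:P)
  /\ (exists s : seq R, is_sorted_spectrum D s)
  /\ (forall s : seq R, is_sorted_spectrum D s ->
        [/\ -1 < s`_1 < - (1 / 2), s`_2 = -1 & s`_(n.-1) = -3]).
Proof.
move=> n D.
split; first exact: charpoly_main.
have hsz : size (s0 R k) = n by rewrite /s0 /= size_cat !size_nseq /n; lia.
split.
  exists (s0 R k); split => //; [exact: s0_sorted | exact: s0_prod].
move=> s [hsz' hsort hch].
have ps : perm_eq s (s0 R k) by apply: prod_XsubC_eq; rewrite -hch s0_prod.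
have tr : transitive (fun x y : R => y <= x) by move=> y x z h1 h2; exact: le_trans h2 h1.
have an : antisymmetric (fun x y : R => y <= x).
  by move=> x y /andP [h1 h2]; apply/eqP; rewrite eq_le h1 h2.
have -> := sorted_eq tr an hsort (s0_sorted R k hk) ps.
have [k' ek] : exists k', k = k'.+2 by exists (k - 2)%N; lia.
have h1 := r2_gt R k hk; have h2 := r2_lt R k hk.
rewrite /s0 /n ek; rewrite ek in h1 h2.
split.
- by rewrite [nth _ _ 1]/=; apply/andP; split.
- by [].
rewrite (_ : (2 * k'.+2 + 1).-1 = (k'.+2 + k').+2)%N; last by lia.
rewrite [nth _ _ _]/= nth_cat size_nseq.
rewrite (_ : (k' + k' < k')%N = false); last by lia.
rewrite (_ : (k' + k' - k' = k')%N); last by lia.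
change (-3 :: nseq k' (-3)) with (nseq k'.+1 (-3 : R)).
by rewrite nth_nseq ltnSn.
Qed.
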